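(* Let $$R=\begin{pmatrix} 1 & -2 \\ 1 & 1 \end{pmatrix}.$$ There exists a driving function $f:[0,\infty)\to\mathbb{R}^2$ for which the Skorokhod problem with matrix $R$ has two distinct solutions $(g,m)$ and $(\overline g,\overline m)$ with $g\neq \overline g$; that is, both satisfy $g(t)=f(t)+Rm(t)$ and $\overline g(t)=f(t)+R\overline m(t)$ for all $t\ge 0$ together with the other conditions of the Skorokhod problem.
   Context: For $b=(b_1,b_2)\in\mathbb{R}^2$ write $b\ge 0$ if $b_1\ge 0$ and $b_2\ge 0$, and let $D=\{b\in\mathbb{R}^2: b\ge 0\}$. A driving function is a continuous function $f:[0,\infty)\to\mathbb{R}^2$ with $f(0)\ge 0$. Given a real $2\times 2$ matrix $R$ and a driving function $f$, a solution of the Skorokhod problem is a pair $(g,m)$ where (1) $g:[0,\infty)\to D$ is continuous; (2) $m=(m_1,m_2):[0,\infty)\to\mathbb{R}^2$ is continuous with $m(0)=0$ and each $m_j$ non-decreasing; (3) $g(t)=f(t)+Rm(t)$ for all $t\ge 0$ (the Skorokhod equation); and (4) for $j=1,2$, $m_j$ increases only when $g_j=0$, i.e. $\int_0^\infty g_j(t)\,dm_j(t)=0$. *)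

(* Defs.v *)
From Stdlib Require Import Reals.
Open Scope R_scope.

(* Vectors of R^2 are represented by their two coordinate functions.
   Functions are defined on all of R but only their values on [0,oo) matter. *)

Definition cont_on_nonneg (h : R -> R) : Prop :=
  forall t, 0 <= t -> limit1_in h (fun x => 0 <= x) (h t) t.

Definition driving (f1 f2 : R -> R) : Prop :=
  cont_on_nonneg f1 /\ cont_on_nonneg f2 /\ 0 <= f1 0 /\ 0 <= f2 0.

Definition nondecr_on_nonneg (h : R -> R) : Prop :=
  forall s t, 0 <= s -> s <= t -> h s <= h t.

(* "m increases only when g = 0": m is constant on every interval [s,t]
   of [0,oo) on which g stays strictly positive (equivalently, for g >= 0
   continuous and m continuous non-decreasing, int_0^oo g dm = 0). *)
Definition increases_only_at_zero (g m : R -> R) : Prop :=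
  forall s t, 0 <= s -> s <= t ->
    (forall u, s <= u <= t -> 0 < g u) -> m s = m t.

Definition skorokhod_solution (r11 r12 r21 r22 : R) (f1 f2 g1 g2 m1 m2 : R -> R) : Prop :=
  cont_on_nonneg g1 /\ cont_on_nonneg g2 /\
  (forall t, 0 <= t -> 0 <= g1 t /\ 0 <= g2 t) /\
  cont_on_nonneg m1 /\ cont_on_nonneg m2 /\
  m1 0 = 0 /\ m2 0 = 0 /\
  nondecr_on_nonneg m1 /\ nondecr_on_nonneg m2 /\
  (forall t, 0 <= t ->
     g1 t = f1 t + (r11 * m1 t + r12 * m2 t) /\
     g2 t = f2 t + (r21 * m1 t + r22 * m2 t)) /\
  increases_only_at_zero g1 m1 /\ increases_only_at_zero g2 m2.

(* Main.v *)
Require Import Defs.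
From Stdlib Require Import Reals Lra Lia ZArith Classical.
Open Scope R_scope.

Definition P (k : Z) : R := exp (IZR k * ln 2).

Lemma ln2_pos : 0 < ln 2.
Proof. rewrite <- ln_1. apply ln_increasing; lra. Qed.

Lemma P_pos k : 0 < P k.
Proof. unfold P. apply exp_pos. Qed.

Lemma P_S k : P (k + 1) = 2 * P k.
Proof.
  unfold P. rewrite plus_IZR. replace ((IZR k + 1) * ln 2) with (IZR k * ln 2 + ln 2) by ring.
  rewrite exp_plus, exp_ln by lra. ring.
Qed.

Lemma P_0 : P 0 = 1.
Proof. unfold P. simpl. rewrite Rmult_0_l. apply exp_0. Qed.

Lemma P_lt a b : (a < b)%Z -> P a < P b.
Proof.
  intros H. unfold P. apply exp_increasing. apply IZR_lt in H.
  apply Rmult_lt_compat_r; [apply ln2_pos|exact H].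
Qed.

Lemma P_le a b : (a <= b)%Z -> P a <= P b.
Proof.
  intros H. destruct (Z.eq_dec a b) as [->|Hn]; [lra|]. left; apply P_lt; lia.
Qed.

Definition blk (t : R) : Z := (up (ln t / ln 2) - 1)%Z.

Lemma blk_spec t : 0 < t -> P (blk t) <= t < P (blk t + 1).
Proof.
  intros Ht. unfold blk. set (y := ln t / ln 2).
  destruct (archimed y) as [H1 H2].
  assert (Hy : y * ln 2 = ln t) by (unfold y; field; apply Rgt_not_eq, ln2_pos).
  pose proof ln2_pos as L.
  rewrite <- (exp_ln t Ht). unfold P.
  rewrite minus_IZR. replace (up y - 1 + 1)%Z with (up y) by ring. simpl IZR.
  split.
  - destruct (Rle_lt_or_eq_dec ((IZR (up y) - 1) * ln 2) (ln t)).
    + rewrite <- Hy. apply Rmult_le_compat_r; lra.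
    + left; apply exp_increasing; auto.
    + right; f_equal; auto.
  - apply exp_increasing. rewrite <- Hy. apply Rmult_lt_compat_r; lra.
Qed.

Definition ext (F : R -> R) (t : R) : R :=
  if Rle_dec t 0 then 0 else P (blk t) * F (t / P (blk t)).

Lemma div_range p t : 0 < p -> p <= t <= 2 * p -> 1 <= t / p <= 2.
Proof.
  intros Hp [H1 H2]. split.
  - apply Rmult_le_reg_r with p; auto. unfold Rdiv. rewrite Rmult_assoc, Rinv_l by lra. lra.
  - apply Rmult_le_reg_r with p; auto. unfold Rdiv. rewrite Rmult_assoc, Rinv_l by lra. lra.
Qed.

Lemma div_range' p t : 0 < p -> p <= t < 2 * p -> 1 <= t / p < 2.
Proof.
  intros Hp [H1 H2]. split.
  - apply Rmult_le_reg_r with p; auto. unfold Rdiv. rewrite Rmult_assoc, Rinv_l by lra. lra.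
  - apply Rmult_lt_reg_r with p; auto. unfold Rdiv. rewrite Rmult_assoc, Rinv_l by lra. lra.
Qed.

Lemma ext_pos F t : 0 < t -> ext F t = P (blk t) * F (t / P (blk t)).
Proof. intros. unfold ext. destruct (Rle_dec t 0); [lra|auto]. Qed.

Lemma ext_0 F t : t <= 0 -> ext F t = 0.
Proof. intros. unfold ext. destruct (Rle_dec t 0); [auto|lra]. Qed.

Lemma ext_rep F : F 2 = 2 * F 1 -> forall t k, 0 < t -> P k <= t <= P (k+1) ->
  ext F t = P k * F (t / P k).
Proof.
  intros HF t k Ht Hk. rewrite ext_pos by auto.
  pose proof (blk_spec t Ht) as Hb. set (n := blk t) in *.
  destruct (Z.lt_trichotomy n k) as [Hlt|[Heq|Hgt]].
  - assert (P (n+1) <= P k) by (apply P_le; lia). lra.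
  - subst; reflexivity.
  - destruct (Z.eq_dec n (k+1)) as [He|Hne].
    + assert (Et : t = P (k+1)) by (rewrite He in Hb; lra).
      rewrite He, Et. rewrite P_S. pose proof (P_pos k).
      replace (2 * P k / (2 * P k)) with 1 by (field; lra).
      replace (2 * P k / P k) with 2 by (field; lra). rewrite HF. ring.
    + assert (P (k+1) < P n) by (apply P_lt; lia). lra.
Qed.

Lemma loc u : 0 < u -> exists k1 k2 d, 0 < d /\
  P k1 <= u <= P (k1+1) /\ P k2 <= u <= P (k2+1) /\
  forall v, Rabs (v - u) < d -> 0 < v /\ ((P k1 <= v <= P (k1+1)) \/ (P k2 <= v <= P (k2+1))).
Proof.
  intros Hu. pose proof (blk_spec u Hu) as Hb. set (n := blk u) in *.
  pose proof (P_pos n). rewrite P_S in Hb.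
  destruct (Rle_lt_or_eq_dec _ _ (proj1 Hb)) as [Hl|He].
  - exists n, n, (Rmin (u - P n) (2 * P n - u)). split.
    { apply Rmin_glb_lt; lra. }
    rewrite P_S. split; [lra|split;[lra|]].
    intros v Hv. apply Rabs_def2 in Hv. destruct Hv as [Hv1 Hv2].
    pose proof (Rmin_l (u - P n) (2 * P n - u)). pose proof (Rmin_r (u - P n) (2 * P n - u)).
    split; [lra|left; lra].
  - exists (n - 1)%Z, n, (P (n-1)).
    assert (E : P n = 2 * P (n-1)) by (rewrite <- P_S; f_equal; ring).
    pose proof (P_pos (n-1)).
    replace (n - 1 + 1)%Z with n by ring. rewrite P_S.
    split; [auto|split;[lra|split;[lra|]]].
    intros v Hv. apply Rabs_def2 in Hv. destruct Hv as [Hv1 Hv2].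
    split; [lra|]. destruct (Rle_dec v u); [left|right]; lra.
Qed.

Lemma cont_eps f x : continuity_pt f x ->
  forall eps, 0 < eps -> exists alp, 0 < alp /\ forall y, Rabs (y - x) < alp -> Rabs (f y - f x) < eps.
Proof.
  intros H eps He. destruct (H eps He) as [alp [Ha Hy]]. exists alp. split; auto.
  intros y Hyx. destruct (Req_dec x y) as [<-|Hn].
  - unfold Rminus. rewrite Rplus_opp_r, Rabs_R0. auto.
  - apply (Hy y). split. split; [exact I|auto]. exact Hyx.
Qed.

Lemma eps_cont f x :
  (forall eps, 0 < eps -> exists alp, 0 < alp /\ forall y, Rabs (y - x) < alp -> Rabs (f y - f x) < eps) ->
  continuity_pt f x.
Proof.
  intros H eps He. destruct (H eps He) as [alp [Ha Hy]]. exists alp. split; auto.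
  intros y [_ Hd]. apply Hy. exact Hd.
Qed.

Definition pw (b : R) (h1 h2 : R -> R) (x : R) : R := if Rle_dec x b then h1 x else h2 x.

Lemma pw_cont b h1 h2 : (forall x, continuity_pt h1 x) -> (forall x, continuity_pt h2 x) ->
  h1 b = h2 b -> forall x, continuity_pt (pw b h1 h2) x.
Proof.
  intros C1 C2 E x. apply eps_cont. intros eps He.
  destruct (cont_eps _ _ (C1 x) eps He) as [a1 [Ha1 H1]].
  destruct (cont_eps _ _ (C2 x) eps He) as [a2 [Ha2 H2]].
  destruct (Rtotal_order x b) as [Hl|[He'|Hg]].
  - exists (Rmin a1 (b - x)). split. apply Rmin_glb_lt; lra.
    intros y Hy. pose proof (Rmin_l a1 (b-x)). pose proof (Rmin_r a1 (b-x)).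
    apply Rabs_def2 in Hy as Hy'. unfold pw. destruct (Rle_dec y b); [|lra]. destruct (Rle_dec x b); [|lra].
    apply H1; lra.
  - subst x. exists (Rmin a1 a2). split. apply Rmin_glb_lt; lra.
    intros y Hy. pose proof (Rmin_l a1 a2). pose proof (Rmin_r a1 a2).
    unfold pw. destruct (Rle_dec b b); [|lra]. destruct (Rle_dec y b).
    + apply H1; lra.
    + rewrite E. apply H2; lra.
  - exists (Rmin a2 (x - b)). split. apply Rmin_glb_lt; lra.
    intros y Hy. pose proof (Rmin_l a2 (x-b)). pose proof (Rmin_r a2 (x-b)).
    apply Rabs_def2 in Hy as Hy'. unfold pw. destruct (Rle_dec y b); [lra|]. destruct (Rle_dec x b); [lra|].
    apply H2; lra.
Qed.

Lemma hk_cont F k u : (forall x, continuity_pt F x) -> continuity_pt (fun v => P k * F (v / P k)) u.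
Proof.
  intros C. apply continuity_pt_mult. apply continuity_pt_const. intros a b; reflexivity.
  apply (continuity_pt_comp (fun v => v / P k) F). unfold Rdiv.
  apply continuity_pt_mult. apply derivable_continuous_pt, derivable_pt_id.
  apply continuity_pt_const. intros a b; reflexivity. apply C.
Qed.

Lemma ext_cont F : F 2 = 2 * F 1 -> (forall x, continuity_pt F x) ->
  (exists B, forall x, 1 <= x <= 2 -> Rabs (F x) <= B) -> cont_on_nonneg (ext F).
Proof.
  intros HF C [B HB] t Ht. unfold limit1_in, limit_in. simpl. unfold R_dist.
  intros eps He.
  destruct (Rle_lt_or_eq_dec _ _ Ht) as [Hp|H0].
  - destruct (loc t Hp) as [k1 [k2 [d [Hd [Hk1 [Hk2 Hv]]]]]].
    destruct (cont_eps _ _ (hk_cont F k1 t C) eps He) as [a1 [Ha1 H1]].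
    destruct (cont_eps _ _ (hk_cont F k2 t C) eps He) as [a2 [Ha2 H2]].
    exists (Rmin d (Rmin a1 a2)). split. apply Rmin_glb_lt; auto. apply Rmin_glb_lt; auto.
    intros x [_ Hx]. pose proof (Rmin_l d (Rmin a1 a2)). pose proof (Rmin_r d (Rmin a1 a2)).
    pose proof (Rmin_l a1 a2). pose proof (Rmin_r a1 a2).
    destruct (Hv x ltac:(lra)) as [Hx0 [Hb|Hb]].
    + rewrite (ext_rep F HF x k1), (ext_rep F HF t k1) by auto. apply H1; lra.
    + rewrite (ext_rep F HF x k2), (ext_rep F HF t k2) by auto. apply H2; lra.
  - subst t. rewrite (ext_0 F 0) by lra.
    assert (HB0 : 0 <= B) by (pose proof (HB 1 ltac:(lra)); pose proof (Rabs_pos (F 1)); lra).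
    exists (eps / (B + 1)). split. apply Rdiv_lt_0_compat; lra.
    intros x [Hx0 Hx]. rewrite Rminus_0_r in Hx |- *.
    destruct (Rle_lt_or_eq_dec _ _ Hx0) as [Hxp|Hxe].
    + rewrite ext_pos by auto. pose proof (blk_spec x Hxp) as Hb. set (n := blk x) in *.
      rewrite P_S in Hb. pose proof (P_pos n).
      pose proof (div_range' (P n) x ltac:(auto) ltac:(lra)) as Hr.
      pose proof (HB (x / P n) ltac:(lra)) as Hf.
      rewrite Rabs_mult, (Rabs_right (P n)) by lra.
      rewrite Rabs_right in Hx by lra.
      assert (Hxe : x < eps / (B+1)) by auto.
      assert (x * (B + 1) < eps).
      { apply Rmult_lt_reg_r with (/ (B+1)). apply Rinv_0_lt_compat; lra.
        rewrite Rmult_assoc, Rinv_r by lra. rewrite Rmult_1_r. exact Hxe. }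
      assert (P n * Rabs (F (x / P n)) <= P n * B) by (apply Rmult_le_compat_l; lra).
      nra.
    + subst x. rewrite ext_0 by lra. rewrite Rabs_R0. auto.
Qed.

Lemma blk_le s t : 0 < s -> s <= t -> (blk s <= blk t)%Z.
Proof.
  intros Hs Hst. pose proof (blk_spec s Hs). pose proof (blk_spec t ltac:(lra)).
  destruct (Z_le_gt_dec (blk s) (blk t)) as [|Hg]; auto.
  assert (P (blk t + 1) <= P (blk s)) by (apply P_le; lia). lra.
Qed.

Lemma ext_mono M : M 2 = 2 * M 1 -> 0 <= M 1 ->
  (forall x y, 1 <= x -> x <= y -> y <= 2 -> M x <= M y) -> nondecr_on_nonneg (ext M).
Proof.
  intros HM H1 Hmon s t Hs Hst.
  destruct (Rle_lt_or_eq_dec _ _ Hs) as [Hsp|Hse].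
  - rewrite (ext_pos M s), (ext_pos M t) by lra.
    pose proof (blk_le s t Hsp Hst) as Hz.
    pose proof (blk_spec s Hsp) as Bs. pose proof (blk_spec t ltac:(lra)) as Bt.
    rewrite P_S in Bs, Bt.
    pose proof (P_pos (blk s)). pose proof (P_pos (blk t)).
    pose proof (div_range' _ s H Bs) as Rs.
    pose proof (div_range' _ t H0 Bt) as Rt.
    destruct (Z.eq_dec (blk s) (blk t)) as [E|Ne].
    + rewrite E in *. apply Rmult_le_compat_l; [lra|]. apply Hmon; try lra.
      unfold Rdiv. apply Rmult_le_compat_r; [left; apply Rinv_0_lt_compat; auto|lra].
    + assert (Pl : P (blk s + 1) <= P (blk t)) by (apply P_le; lia). rewrite P_S in Pl.
      assert (M (s / P (blk s)) <= M 2) by (apply Hmon; lra).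
      assert (M 1 <= M (t / P (blk t))) by (apply Hmon; lra).
      apply Rle_trans with (P (blk s) * M 2). apply Rmult_le_compat_l; lra.
      rewrite HM. apply Rle_trans with (P (blk t) * M 1). nra.
      apply Rmult_le_compat_l; lra.
  - subst s. rewrite ext_0 by lra.
    destruct (Rle_dec t 0). rewrite ext_0; lra.
    rewrite ext_pos by lra. pose proof (blk_spec t ltac:(lra)) as Bt. rewrite P_S in Bt.
    pose proof (P_pos (blk t)) as Hpt. pose proof (div_range' _ t Hpt Bt) as Rt.
    assert (M 1 <= M (t / P (blk t))) by (apply Hmon; lra). nra.
Qed.

Lemma const_of_local (m : R -> R) s t : s <= t ->
  (forall u, s <= u <= t -> exists d, 0 < d /\ forall v, Rabs (v - u) < d -> m v = m u) -> m s = m t.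
Proof.
  intros Hst Hloc.
  set (E := fun x => s <= x <= t /\ forall y, s <= y <= x -> m y = m s).
  assert (Eb : bound E) by (exists t; intros x [Hx _]; lra).
  assert (Es : E s) by (split; [lra|intros y Hy; replace y with s by lra; auto]).
  destruct (completeness E Eb (ex_intro _ s Es)) as [c [Hub Hlub]].
  assert (Hc1 : s <= c) by (apply Hub; auto).
  assert (Hc2 : c <= t) by (apply Hlub; intros x [Hx _]; lra).
  destruct (Hloc c ltac:(lra)) as [d [Hd Hv]].
  destruct (classic (exists x, E x /\ c - d < x)) as [[x [Ex Hx]]|Hn].
  2:{ exfalso. assert (c <= c - d). apply Hlub. intros x Ex.
      destruct (Rle_dec x (c - d)); auto. exfalso; apply Hn; exists x; split; auto; lra. lra. }
  assert (Hxc : x <= c) by (apply Hub; auto).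
  destruct Ex as [[Hx1 Hx2] Hxm].
  assert (Hmc : m c = m s).
  { rewrite <- (Hv x). apply Hxm; lra. apply Rabs_def1; lra. }
  destruct (Rle_dec t (c + d / 2)) as [Ht|Ht].
  - assert (Ey : E t).
    { split; [lra|]. intros y Hy. destruct (Rle_dec y x). apply Hxm; lra.
      rewrite Hv. auto. apply Rabs_def1; lra. }
    assert (t <= c) by (apply Hub; auto). replace t with c by lra. auto.
  - assert (Ey : E (c + d / 2)).
    { split; [lra|]. intros y Hy. destruct (Rle_dec y x). apply Hxm; lra.
      rewrite Hv. auto. apply Rabs_def1; lra. }
    assert (c + d/2 <= c) by (apply Hub; auto). lra.
Qed.

Lemma ext_comp G M : G 2 = 2 * G 1 -> M 2 = 2 * M 1 ->
  (forall U, 1 <= U <= 2 -> 0 < G U -> exists a b, a < U < b /\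
      forall V, 1 <= V <= 2 -> a < V < b -> M V = M U) ->
  increases_only_at_zero (ext G) (ext M).
Proof.
  intros HG HM HL s t Hs Hst Hpos. apply const_of_local; auto.
  intros u Hu. pose proof (Hpos u Hu) as Gu.
  assert (Hu0 : 0 < u).
  { destruct (Rle_dec u 0); auto. rewrite ext_0 in Gu; lra. apply Rnot_le_lt; auto. }
  destruct (loc u Hu0) as [k1 [k2 [d [Hd [Hk1 [Hk2 Hv]]]]]].
  assert (Hk : forall k, P k <= u <= P (k+1) -> exists e, 0 < e /\ forall v, 0 < v ->
             P k <= v <= P (k+1) -> Rabs (v - u) < e -> ext M v = ext M u).
  { intros k Hk. pose proof (P_pos k) as Hpk. rewrite P_S in Hk.
    pose proof (div_range _ u Hpk Hk) as Ru.
    rewrite (ext_rep G HG u k) in Gu by (rewrite ?P_S; auto).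
    assert (HGp : 0 < G (u / P k)).
    { destruct (Rlt_le_dec 0 (G (u / P k))); auto. nra. }
    destruct (HL _ Ru HGp) as [a [b [Hab HV]]].
    exists (P k * Rmin (u / P k - a) (b - u / P k)). split.
    { apply Rmult_lt_0_compat; auto. apply Rmin_glb_lt; lra. }
    intros v Hv0 Hvk Hvu. rewrite P_S in Hvk.
    rewrite (ext_rep M HM v k), (ext_rep M HM u k) by (rewrite ?P_S; auto).
    f_equal. apply HV. apply div_range; auto.
    assert (Hab2 : Rabs (v / P k - u / P k) < Rmin (u / P k - a) (b - u / P k)).
    { replace (v / P k - u / P k) with ((v - u) / P k) by (field; lra).
      unfold Rdiv. rewrite Rabs_mult, (Rabs_right (/ P k)).
      apply Rmult_lt_reg_l with (P k); auto. rewrite <- Rmult_assoc, (Rmult_comm (P k)), Rmult_assoc, Rinv_r, Rmult_1_r by lra.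
      lra. left; apply Rinv_0_lt_compat; auto. }
    pose proof (Rmin_l (u / P k - a) (b - u / P k)). pose proof (Rmin_r (u / P k - a) (b - u / P k)).
    apply Rabs_def2 in Hab2. lra. }
  destruct (Hk k1 Hk1) as [e1 [He1 H1]]. destruct (Hk k2 Hk2) as [e2 [He2 H2]].
  exists (Rmin d (Rmin e1 e2)). split. apply Rmin_glb_lt; auto. apply Rmin_glb_lt; auto.
  intros v Hvu. pose proof (Rmin_l d (Rmin e1 e2)). pose proof (Rmin_r d (Rmin e1 e2)).
  pose proof (Rmin_l e1 e2). pose proof (Rmin_r e1 e2).
  destruct (Hv v ltac:(lra)) as [Hv0 [Hb|Hb]].
  apply H1; auto; lra. apply H2; auto; lra.
Qed.

Lemma ext_lin a b d c1 c2 t :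
  ext (fun x => a x + (c1 * b x + c2 * d x)) t = ext a t + (c1 * ext b t + c2 * ext d t).
Proof. unfold ext. destruct (Rle_dec t 0); ring. Qed.

Definition F1 := pw (5/4) (fun x => -3/2 + 4*(x-1)) (pw (3/2) (fun x => -1/2 - 8*(x-5/4))
   (pw (7/4) (fun x => -5/2 + 8*(x-3/2)) (fun x => -1/2 - 10*(x-7/4)))).
Definition F2 := pw (5/4) (fun x => -3 - 4*(x-1)) (pw (3/2) (fun x => -4)
   (pw (7/4) (fun x => -4 - 8*(x-3/2)) (fun x => -6))).
Definition ME1 := pw (21/16) (fun x => 3) (pw (3/2) (fun x => 3 + 8*(x-21/16))
   (pw (37/20) (fun x => 9/2) (fun x => 9/2 + 10*(x-37/20)))).
Definition ME2 := pw (19/16) (fun x => 3/4) (pw (5/4) (fun x => 3/4 + 4*(x-19/16))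
   (pw (27/16) (fun x => 1) (pw (7/4) (fun x => 1 + 8*(x-27/16)) (fun x => 3/2)))).
Definition MC1 := pw (9/8) (fun x => 8/3) (pw (5/4) (fun x => 8/3 + 4/3*(x-9/8))
   (pw (3/2) (fun x => 17/6 + 8*(x-5/4)) (pw (39/20) (fun x => 29/6) (fun x => 29/6 + 10*(x-39/20))))).
Definition MC2 := pw (17/16) (fun x => 7/12) (pw (9/8) (fun x => 7/12 + 4*(x-17/16))
   (pw (5/4) (fun x => 5/6 + 8/3*(x-9/8)) (fun x => 7/6))).

Definition GE1 x := F1 x + (1 * ME1 x + -2 * ME2 x).
Definition GE2 x := F2 x + (1 * ME1 x + 1 * ME2 x).
Definition GC1 x := F1 x + (1 * MC1 x + -2 * MC2 x).
Definition GC2 x := F2 x + (1 * MC1 x + 1 * MC2 x).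

Ltac crunch := unfold GE1, GE2, GC1, GC2, F1, F2, ME1, ME2, MC1, MC2, pw in *;
  repeat lazymatch goal with
  | |- context [Rle_dec ?a ?b] => destruct (Rle_dec a b)
  | H : context [Rle_dec ?a ?b] |- _ => destruct (Rle_dec a b)
  end; lra.

Ltac pwc := repeat (apply pw_cont; [intro; reg | | unfold pw; repeat destruct (Rle_dec _ _); lra]); intro; reg.

Lemma cF1 x : continuity_pt F1 x. Proof. unfold F1. revert x. pwc. Qed.
Lemma cF2 x : continuity_pt F2 x. Proof. unfold F2. revert x. pwc. Qed.
Lemma cME1 x : continuity_pt ME1 x. Proof. unfold ME1. revert x. pwc. Qed.
Lemma cME2 x : continuity_pt ME2 x. Proof. unfold ME2. revert x. pwc. Qed.
Lemma cMC1 x : continuity_pt MC1 x. Proof. unfold MC1. revert x. pwc. Qed.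
Lemma cMC2 x : continuity_pt MC2 x. Proof. unfold MC2. revert x. pwc. Qed.

Lemma cG a b d c1 c2 : (forall x, continuity_pt a x) -> (forall x, continuity_pt b x) ->
  (forall x, continuity_pt d x) -> forall x, continuity_pt (fun x => a x + (c1 * b x + c2 * d x)) x.
Proof.
  intros A B D x. apply continuity_pt_plus; auto. apply continuity_pt_plus;
  apply continuity_pt_mult; auto; apply continuity_pt_const; intros u v; reflexivity.
Qed.

Lemma ext_nonneg F : (forall x, 1 <= x <= 2 -> 0 <= F x) -> forall t, 0 <= ext F t.
Proof.
  intros H t. destruct (Rle_dec t 0). rewrite ext_0; lra.
  rewrite ext_pos by lra. pose proof (blk_spec t ltac:(lra)) as Bt. rewrite P_S in Bt.
  pose proof (P_pos (blk t)) as Hp. pose proof (div_range' _ t Hp Bt) as Rt.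
  apply Rmult_le_pos; [lra|]. apply H; lra.
Qed.

Lemma bnd F : (forall x, 1 <= x <= 2 -> -100 <= F x <= 100) -> exists B, forall x, 1 <= x <= 2 -> Rabs (F x) <= B.
Proof. intros H. exists 100. intros x Hx. apply Rabs_le. auto. Qed.

Lemma sol (M1 M2 : R -> R) (cM1 : forall x, continuity_pt M1 x) (cM2 : forall x, continuity_pt M2 x) :
  M1 2 = 2 * M1 1 -> M2 2 = 2 * M2 1 -> 0 <= M1 1 -> 0 <= M2 1 ->
  (forall x y, 1 <= x -> x <= y -> y <= 2 -> M1 x <= M1 y) ->
  (forall x y, 1 <= x -> x <= y -> y <= 2 -> M2 x <= M2 y) ->
  (forall x, 1 <= x <= 2 -> -100 <= M1 x <= 100) ->
  (forall x, 1 <= x <= 2 -> -100 <= M2 x <= 100) ->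
  (forall x, 1 <= x <= 2 -> -100 <= F1 x + (1 * M1 x + -2 * M2 x) <= 100) ->
  (forall x, 1 <= x <= 2 -> -100 <= F2 x + (1 * M1 x + 1 * M2 x) <= 100) ->
  (forall x, 1 <= x <= 2 -> 0 <= F1 x + (1 * M1 x + -2 * M2 x)) ->
  (forall x, 1 <= x <= 2 -> 0 <= F2 x + (1 * M1 x + 1 * M2 x)) ->
  (forall U, 1 <= U <= 2 -> 0 < F1 U + (1 * M1 U + -2 * M2 U) -> exists a b, a < U < b /\
      forall V, 1 <= V <= 2 -> a < V < b -> M1 V = M1 U) ->
  (forall U, 1 <= U <= 2 -> 0 < F2 U + (1 * M1 U + 1 * M2 U) -> exists a b, a < U < b /\
      forall V, 1 <= V <= 2 -> a < V < b -> M2 V = M2 U) ->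
  skorokhod_solution 1 (-2) 1 1 (ext F1) (ext F2)
    (ext (fun x => F1 x + (1 * M1 x + -2 * M2 x))) (ext (fun x => F2 x + (1 * M1 x + 1 * M2 x)))
    (ext M1) (ext M2).
Proof.
  intros H1 H2 P1 P2 Mo1 Mo2 B1 B2 BG1 BG2 N1 N2 L1 L2.
  assert (HF1 : F1 2 = 2 * F1 1) by crunch.
  assert (HF2 : F2 2 = 2 * F2 1) by crunch.
  repeat split.
  - apply ext_cont. rewrite HF1, H1, H2; ring. apply cG; auto. apply cF1. apply bnd; auto.
  - apply ext_cont. rewrite HF2, H1, H2; ring. apply cG; auto. apply cF2. apply bnd; auto.
  - apply ext_nonneg; auto.
  - apply ext_nonneg; auto.
  - apply ext_cont; auto. apply bnd; auto.
  - apply ext_cont; auto. apply bnd; auto.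
  - apply ext_0; lra.
  - apply ext_0; lra.
  - apply ext_mono; auto.
  - apply ext_mono; auto.
  - apply ext_lin.
  - apply ext_lin.
  - apply ext_comp; auto. rewrite HF1, H1, H2; ring.
  - apply ext_comp; auto. rewrite HF2, H1, H2; ring.
Qed.

Ltac region a b := exists a, b; split; [lra | intros V HV HVab; crunch].

Lemma drv : driving (ext F1) (ext F2).
Proof.
  assert (HF1 : F1 2 = 2 * F1 1) by crunch.
  assert (HF2 : F2 2 = 2 * F2 1) by crunch.
  split. apply ext_cont. exact HF1. apply cF1. apply bnd; intros; crunch.
  split. apply ext_cont. exact HF2. apply cF2. apply bnd; intros; crunch.
  rewrite !ext_0 by lra. lra.
Qed.

Lemma s1 : skorokhod_solution 1 (-2) 1 1 (ext F1) (ext F2) (ext GE1) (ext GE2) (ext ME1) (ext ME2).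
Proof.
  apply sol.
  apply cME1. apply cME2. crunch. crunch. crunch. crunch.
  1-8: intros; crunch.
  - intros U HU HG. destruct (Rlt_le_dec U (21/16)). region 0 (21/16).
    destruct (Rle_lt_dec U (3/2)). exfalso; crunch.
    destruct (Rlt_le_dec U (37/20)). region (3/2) (37/20). exfalso; crunch.
  - intros U HU HG. destruct (Rlt_le_dec U (19/16)). region 0 (19/16).
    destruct (Rle_lt_dec U (5/4)). exfalso; crunch.
    destruct (Rlt_le_dec U (27/16)). region (5/4) (27/16).
    destruct (Rle_dec U (7/4)). exfalso; crunch. region (7/4) 3.
Qed.

Lemma s2 : skorokhod_solution 1 (-2) 1 1 (ext F1) (ext F2) (ext GC1) (ext GC2) (ext MC1) (ext MC2).
Proof.
  apply sol.
  apply cMC1. apply cMC2. crunch. crunch. crunch. crunch.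
  1-8: intros; crunch.
  - intros U HU HG. destruct (Rlt_le_dec U (9/8)). region 0 (9/8).
    destruct (Rle_lt_dec U (3/2)). exfalso; crunch.
    destruct (Rlt_le_dec U (39/20)). region (3/2) (39/20). exfalso; crunch.
  - intros U HU HG. destruct (Rlt_le_dec U (17/16)). region 0 (17/16).
    destruct (Rle_dec U (5/4)). exfalso; crunch. region (5/4) 3.
Qed.

Lemma kF2 : F2 2 = 2 * F2 1. Proof. crunch. Qed.
Lemma kE1 : ME1 2 = 2 * ME1 1. Proof. crunch. Qed.
Lemma kE2 : ME2 2 = 2 * ME2 1. Proof. crunch. Qed.
Lemma kC1 : MC1 2 = 2 * MC1 1. Proof. crunch. Qed.
Lemma kC2 : MC2 2 = 2 * MC2 1. Proof. crunch. Qed.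
Lemma vE : GE2 1 = 3/4. Proof. crunch. Qed.
Lemma vC : GC2 1 = 1/4. Proof. crunch. Qed.

Lemma dst : ext GE2 1 <> ext GC2 1.
Proof.
  assert (HE : GE2 2 = 2 * GE2 1) by (unfold GE2; rewrite kF2, kE1, kE2; ring).
  assert (HC : GC2 2 = 2 * GC2 1) by (unfold GC2; rewrite kF2, kC1, kC2; ring).
  assert (Hk : P 0 <= 1 <= P (0 + 1)) by (rewrite P_S, P_0; lra).
  rewrite (ext_rep GE2 HE 1 0 ltac:(lra) Hk), (ext_rep GC2 HC 1 0 ltac:(lra) Hk).
  rewrite P_0. replace (1/1) with 1 by field. rewrite vE, vC. lra.
Qed.

Theorem theorem2p1 :
  exists f1 f2 : R -> R,
    driving f1 f2 /\
    exists g1 g2 m1 m2 gb1 gb2 mb1 mb2 : R -> R,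
      skorokhod_solution 1 (-2) 1 1 f1 f2 g1 g2 m1 m2 /\
      skorokhod_solution 1 (-2) 1 1 f1 f2 gb1 gb2 mb1 mb2 /\
      exists t, 0 <= t /\ (g1 t <> gb1 t \/ g2 t <> gb2 t).
Proof.
  exists (ext F1), (ext F2). split. exact drv.
  exists (ext GE1), (ext GE2), (ext ME1), (ext ME2), (ext GC1), (ext GC2), (ext MC1), (ext MC2).
  split. exact s1. split. exact s2.
  exists 1. split. lra. right. exact dst.
Qed.
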